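(* Let $d\ge 2$. There exist constants $C>1$ and $c\in(0,1)$ depending only on $d$ such that the following holds for every finite field $\mathbb F_q$ of characteristic greater than two. Let $j\in\mathbb F_q^*$, $S_j=\{x\in\mathbb F_q^d: x_1^2+\cdots+x_d^2=j\}$, $E\subset S_j$ and $F\subset\mathbb F_q^d$. If $|E||F|\ge Cq^d$, then $|\Pi(E,F)|\ge c\,q$.
   Context: $\mathbb F_q$ is a finite field with $q$ elements and characteristic greater than two; $\mathbb F_q^*=\mathbb F_q\setminus\{0\}$. For $E,F\subset\mathbb F_q^d$, $\Pi(E,F)=\{x\cdot y: x\in E,\ y\in F\}$ with $x\cdot y=\sum_i x_iy_i$. *)

(* Defs.v *)
From HB Require Import structures.
From mathcomp Require Import all_boot all_order all_algebra all_field.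
Set Implicit Arguments. Unset Strict Implicit. Unset Printing Implicit Defensive.
Import Order.TTheory GRing.Theory Num.Theory.
Local Open Scope ring_scope.

Definition dotv (K : fieldType) (d : nat) (x y : 'rV[K]_d) : K :=
  \sum_(i < d) x 0 i * y 0 i.

Definition sphere (K : finFieldType) (d : nat) (j : K) : {set 'rV[K]_d} :=
  [set x : 'rV[K]_d | dotv x x == j].

Definition dotset (K : finFieldType) (d : nat) (E F : {set 'rV[K]_d}) : {set K} :=
  [set dotv x y | x in E, y in F].

(* Main.v *)
Require Import Defs.
From HB Require Import structures.
From mathcomp Require Import all_boot all_order all_algebra all_field.
From mathcomp Require Import ring lra.
Import Order.TTheory GRing.Theory Num.Theory.
Set Implicit Arguments. Unset Strict Implicit.
Local Open Scope ring_scope.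

Lemma dotvBr (K : fieldType) d (x y y' : 'rV[K]_d) :
  dotv x (y - y') = dotv x y - dotv x y'.
Proof. rewrite /dotv -sumrB; apply: eq_bigr => i _; by rewrite !mxE mulrBr. Qed.

Lemma dotvZl (K : fieldType) d (a : K) (x y : 'rV[K]_d) :
  dotv (a *: x) y = a * dotv x y.
Proof. rewrite /dotv mulr_sumr; apply: eq_bigr => i _; by rewrite mxE mulrA. Qed.

Lemma dotvDl (K : fieldType) d (x z y : 'rV[K]_d) :
  dotv (x + z) y = dotv x y + dotv z y.
Proof. rewrite /dotv -big_split; apply: eq_bigr => i _; by rewrite mxE mulrDl. Qed.

Lemma dotvZZ (K : fieldType) d (a : K) (x : 'rV[K]_d) :
  dotv (a *: x) (a *: x) = a ^+ 2 * dotv x x.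
Proof. rewrite dotvZl /dotv mulr_sumr expr2 mulr_sumr; apply: eq_bigr => i _.
rewrite mxE; ring. Qed.

Lemma cs_set (I : finType) (A : {pred I}) (a : I -> rat) :
  (\sum_(i in A) a i) ^+ 2 <= #|A|%:R * \sum_(i in A) a i ^+ 2.
Proof.
set n := #|A|%:R; set S1 := \sum_(i in A) a i; set S2 := \sum_(i in A) a i ^+ 2.
have key : forall m : rat, \sum_(i in A) (a i - m) ^+ 2 = S2 - m * S1 *+ 2 + n * m ^+ 2.
  move=> m; rewrite /S2 /S1 /n.
  rewrite (eq_bigr (fun i => a i ^+ 2 + ((- (2 * m)) * a i + m ^+ 2))); last by move=> i _; ring.
  rewrite !big_split /= -mulr_sumr sumr_const -mulr_natl; ring.
have H0 : forall m : rat, 0 <= S2 - m * S1 *+ 2 + n * m ^+ 2.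
  by move=> m; rewrite -key sumr_ge0 // => i _; rewrite sqr_ge0.
have [n0|nn0] := eqVneq n 0.
  have hA : #|A| = 0%N by apply/eqP; rewrite -(eqr_nat rat) -/n n0.
  have -> : S1 = 0 by rewrite /S1 big1 // => i iA; move: (card0_eq hA i); rewrite iA inE.
  by rewrite expr0n /= mulr_ge0 // ?sumr_ge0 // => i _; rewrite sqr_ge0.
have h := H0 (S1 / n).
have np : 0 < n by rewrite lt_def nn0 ler0n.
have e : S2 - S1 / n * S1 *+ 2 + n * (S1 / n) ^+ 2 = (n * S2 - S1 ^+ 2) / n by field.
rewrite e in h.
have e2 : n * S2 - S1 ^+ 2 = n * ((n * S2 - S1 ^+ 2) / n) by field.
by rewrite -subr_ge0 e2 mulr_ge0 // ltW.
Qed.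

Lemma cs_full (I : finType) (a : I -> rat) :
  (\sum_i a i) ^+ 2 <= #|I|%:R * \sum_i a i ^+ 2.
Proof.
have := @cs_set I [set: I] a; rewrite cardsT.
by rewrite !(eq_bigl xpredT _ (fun i => in_setT i)).
Qed.

Lemma sum_ind (T : finType) (a : T) : \sum_(t : T) ((a == t)%:R : rat) = 1.
Proof.
rewrite (bigD1 a) //= eqxx big1 ?addr0 // => t ta.
by rewrite eq_sym (negbTE ta).
Qed.

Lemma sum_ind2 (T : finType) (a b : T) :
  \sum_(t : T) ((a == t)%:R * (b == t)%:R : rat) = (a == b)%:R.
Proof.
rewrite (eq_bigr (fun t => (a == b)%:R * (a == t)%:R)); last first.
  move=> t _; have [<-|] := eqVneq a t; first by rewrite eq_sym mulrC.
  by rewrite !mul0r mulr0.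
by rewrite -mulr_sumr sum_ind mulr1.
Qed.

Definition fx (K : finFieldType) d (F : {set 'rV[K]_d}) (x : 'rV[K]_d) (t : K) : rat :=
  \sum_(y in F) ((dotv x y == t)%:R).
Definition Pc (K : finFieldType) d (F : {set 'rV[K]_d}) (x : 'rV[K]_d) : rat :=
  \sum_(y in F) \sum_(y' in F) ((dotv x y == dotv x y')%:R).

Lemma sum_fx (K : finFieldType) d (F : {set 'rV[K]_d}) (x : 'rV[K]_d) :
  \sum_t fx F x t = #|F|%:R.
Proof.
rewrite /fx exchange_big /=.
rewrite (eq_bigr (fun _ => 1)) ?sumr_const //.
by move=> y _; rewrite sum_ind.
Qed.

Lemma sum_fx2 (K : finFieldType) d (F : {set 'rV[K]_d}) (x : 'rV[K]_d) :
  \sum_t fx F x t ^+ 2 = Pc F x.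
Proof.
rewrite /fx /Pc.
under eq_bigr => t _ do rewrite expr2 big_distrlr /=.
rewrite exchange_big /=; apply: eq_bigr => y _.
rewrite exchange_big /=; apply: eq_bigr => y' _.
by rewrite sum_ind2.
Qed.

Lemma Pc_ge (K : finFieldType) d (F : {set 'rV[K]_d}) (x : 'rV[K]_d) :
  #|F|%:R ^+ 2 <= #|K|%:R * Pc F x.
Proof. by rewrite -(sum_fx F x) -(sum_fx2 F x) cs_full. Qed.

Lemma PcZ (K : finFieldType) d (F : {set 'rV[K]_d}) (x : 'rV[K]_d) (l : K) :
  l != 0 -> Pc F (l *: x) = Pc F x.
Proof.
move=> l0; rewrite /Pc; apply: eq_bigr => y _; apply: eq_bigr => y' _.
by rewrite !dotvZl (inj_eq (mulfI l0)).
Qed.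

Lemma hyper (K : finFieldType) d (w : 'rV[K]_d) : w != 0 ->
  #|K|%:R * \sum_(z : 'rV[K]_d) ((dotv z w == 0)%:R : rat) = (#|K| ^ d)%:R.
Proof.
move=> w0.
have [i wi] : exists i, w 0 i != 0.
  case: (pickP (fun i => w 0 i != 0)) => [i wi | h]; first by exists i.
  case/negP: w0; apply/eqP/rowP => i; move: (h i) => /negbFE/eqP ->.
  by rewrite mxE.
pose e := (w 0 i)^-1 *: (\row_k ((k == i)%:R : K)).
have de : dotv e w = 1.
  rewrite dotvZl /dotv (bigD1 i) //= big1 => [|k ki].
    by rewrite !mxE eqxx mul1r addr0 mulVf.
  by rewrite mxE (negbTE ki) mul0r.
have ht : forall t, \sum_z ((dotv z w == t)%:R : rat) = \sum_z ((dotv z w == 0)%:R).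
  move=> t; rewrite (reindex_inj (can_inj (addrK (t *: e)))) /=.
  apply: eq_bigr => z _; rewrite dotvDl dotvZl de mulr1 -subr_eq0 addrK.
  by [].
have tot : \sum_t \sum_(z : 'rV[K]_d) ((dotv z w == t)%:R : rat) = (#|K| ^ d)%:R.
  rewrite exchange_big /= (eq_bigr (fun _ => 1)) => [|z _]; last by rewrite sum_ind.
  by rewrite sumr_const card_mx mul1n.
by rewrite -tot (eq_bigr _ (fun t _ => ht t)) sumr_const mulr_natl.
Qed.

Lemma sum_all (K : finFieldType) d :
  \sum_(z : 'rV[K]_d) (1 : rat) = (#|K| ^ d)%:R.
Proof. by rewrite sumr_const card_mx mul1n. Qed.

Lemma sumPc (K : finFieldType) d (F : {set 'rV[K]_d}) :
  #|K|%:R * \sum_z Pc F z =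
  #|F|%:R ^+ 2 * (#|K| ^ d)%:R + #|F|%:R * ((#|K| ^ d)%:R * (#|K|%:R - 1)).
Proof.
have inner : forall y y' : 'rV[K]_d,
    #|K|%:R * \sum_z ((dotv z y == dotv z y')%:R : rat) =
    (#|K| ^ d)%:R + (y == y')%:R * ((#|K| ^ d)%:R * (#|K|%:R - 1)).
  move=> y y'; have [<-|yy] := eqVneq y y'.
    rewrite (eq_bigr (fun _ => 1)) => [|z _]; last by rewrite eqxx.
    rewrite sum_all.
    rewrite (_ : (true%:R : rat) = 1) //.
    rewrite mul1r. 
    ring.
  rewrite (eq_bigr (fun z => ((dotv z (y - y') == 0)%:R : rat))); last first.
    by move=> z _; rewrite dotvBr subr_eq0.
  by rewrite hyper ?subr_eq0 // mul0r addr0.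
rewrite /Pc exchange_big /= mulr_sumr.
rewrite (eq_bigr (fun y => \sum_(y' in F) ((#|K| ^ d)%:R + (y == y')%:R * ((#|K| ^ d)%:R * (#|K|%:R - 1))))); last first.
  move=> y yF; rewrite exchange_big /= mulr_sumr; apply: eq_bigr => y' _.
  by rewrite inner.
rewrite (eq_bigr (fun y => (#|K| ^ d)%:R *+ #|F| + (#|K| ^ d)%:R * (#|K|%:R - 1))); last first.
  move=> y yF. rewrite big_split /= sumr_const. congr (_ + _).
  rewrite (bigD1 y) //.
  rewrite eqxx mul1r.
  rewrite big1; first by rewrite /= addr0.
  move=> y' /andP[_ yy].
  by rewrite eq_sym (negbTE yy) mul0r.
rewrite sumr_const.
ring.
Qed.

Lemma sum_nz (K : finFieldType) (c : rat) :
  \sum_(l : K | l != 0) c = (#|K|%:R - 1) * c.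
Proof.
have H : \sum_(l : K) c = c + \sum_(l : K | l != 0) c := bigD1 0 isT.
rewrite sumr_const in H.
have -> : \sum_(l : K | l != 0) c = c *+ #|K| - c by rewrite H addrC addKr.
by rewrite -mulr_natl; ring.
Qed.

Lemma count2 (K : finFieldType) d (j : K) (z : 'rV[K]_d) : j != 0 ->
  \sum_(l : K | l != 0) ((l^-1 *: z \in sphere d j)%:R : rat) <= 2.
Proof.
move=> j0.
pose A := [set l : K | (l != 0) && (l^-1 *: z \in sphere d j)].
have -> : \sum_(l : K | l != 0) ((l^-1 *: z \in sphere d j)%:R : rat) = \sum_(l in A) 1.
  rewrite big_mkcond [RHS]big_mkcond /=.
  apply: eq_bigr => l _; rewrite [l \in A]inE; case: (l != 0) => //=.
  by case: (_ \in _).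
rewrite sumr_const.
suff hA : (#|A| <= 2)%N by rewrite ler_nat.
have [->|[m mA]] := set_0Vmem A; first by rewrite cards0.
have sub : A \subset [set m; -m].
  apply/subsetP => l; rewrite /A !inE => /andP[l0 lS].
  move: mA; rewrite /A !inE => /andP[m0 mS].
  move: lS mS; rewrite ?inE !dotvZZ => /eqP lS /eqP mS.
  have a0 : dotv z z != 0.
    by apply/eqP => a0; move: j0; rewrite -mS a0 mulr0 eqxx.
  have e : l^-1 ^+ 2 = m^-1 ^+ 2 by apply: (mulIf a0); rewrite lS mS.
  move/eqP: e; rewrite -subr_eq0 subr_sqr mulf_eq0 subr_eq0 addr_eq0 -invrN.
  by case/orP => /eqP /invr_inj ->; rewrite eqxx ?orbT.
apply: leq_trans (subset_leq_card sub) _.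
by rewrite cards2; case: (m != -m).
Qed.

Lemma cone (K : finFieldType) d (j : K) (h : 'rV[K]_d -> rat) : j != 0 ->
  (forall z, 0 <= h z) -> (forall (l : K) z, l != 0 -> h (l *: z) = h z) ->
  (#|K|%:R - 1) * \sum_(x in sphere d j) h x <= 2 * \sum_z h z.
Proof.
move=> j0 hge hZ.
rewrite -sum_nz.
have e1 : forall l : K, l != 0 ->
    \sum_(x in sphere d j) h x = \sum_z ((l^-1 *: z \in sphere d j)%:R * h z).
  move=> l l0.
  rewrite [RHS](reindex_inj (scalerI l0)) /=.
  rewrite big_mkcond /=; apply: eq_bigr => z _.
  rewrite scalerA mulVf // scale1r hZ //.
  by case: (z \in _); rewrite ?mul1r ?mul0r.
rewrite (eq_bigr _ e1) exchange_big /= mulr_sumr.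
apply: ler_sum => z _.
rewrite [2 * _]mulrC.
have := ler_wpM2l (hge z) (count2 (d:=d) z j0).
by rewrite -mulr_suml [_ * h z]mulrC.
Qed.

Lemma sum_sub_le (T : finType) (A B : {set T}) (g : T -> rat) :
  A \subset B -> (forall x, 0 <= g x) -> \sum_(x in A) g x <= \sum_(x in B) g x.
Proof.
move=> AB g0.
rewrite [X in _ <= X](bigID (fun x => x \in A)) /=.
have -> : \sum_(i in B | i \in A) g i = \sum_(i in A) g i.
  apply: eq_bigl => x; rewrite andbC; case xA: (x \in A) => //=.
  by rewrite (subsetP AB).
by rewrite lerDl sumr_ge0.
Qed.

Lemma sqexp (K : finFieldType) (g : K -> rat) (a b : rat) :
  \sum_t (a * g t - b) ^+ 2 =
  a ^+ 2 * \sum_t g t ^+ 2 - 2 * a * b * \sum_t g t + b ^+ 2 * #|K|%:R.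
Proof.
rewrite (eq_bigr (fun t => a ^+ 2 * g t ^+ 2 + ((- (2 * a * b)) * g t + b ^+ 2)));
  last by move=> t _; ring.
rewrite !big_split /= -!mulr_sumr sumr_const -mulr_natr; ring.
Qed.

Lemma q_gt1 (K : finFieldType) : 1 < (#|K|%:R : rat).
Proof.
have h : (1 < #|K|)%N by apply/card_gt1P; exists 0, 1; split => //; rewrite eq_sym oner_neq0.
by rewrite (ltr_nat rat 1 #|K|).
Qed.

Unset Implicit Arguments.
Set Strict Implicit.

Theorem theorem3p2 (d : nat) (hd : (2 <= d)%N) :
  exists (C c : rat), 1 < C /\ 0 < c < 1 /\
    forall (K : finFieldType), 2%N \notin [pchar K] ->
    forall (j : K), j != 0 ->
    forall (E F : {set 'rV[K]_d}), E \subset sphere d j ->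
      C * (#|K| ^ d)%:R <= (#|E| * #|F|)%:R ->
      c * #|K|%:R <= #|dotset E F|%:R.
Proof.
exists 2, (1/2); split; first by [].
split; first by [].
move=> K _ j j0 E F ES hyp.
pose nu (t : K) : rat := \sum_(x in E) fx F x t.
have q1 := q_gt1 K.
set q : rat := #|K|%:R in q1 *.
have S1 : \sum_t nu t = #|E|%:R * #|F|%:R.
  rewrite /nu exchange_big /= (eq_bigr (fun _ => #|F|%:R)) => [|x _]; last exact: sum_fx.
  by rewrite sumr_const mulr_natl.
have nu0 : forall t, t \notin dotset E F -> nu t = 0.
  move=> t tD; rewrite /nu big1 // => x xE; rewrite /fx big1 // => y yF.
  case: eqP => // e; case/negP: tD; rewrite -e.
  exact: (imset2_f (fun x y => dotv x y) xE yF).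
have restr : forall g : K -> rat, (forall t, t \notin dotset E F -> g t = 0) ->
    \sum_t g t = \sum_(t in dotset E F) g t.
  move=> g hg; rewrite [RHS]big_mkcond; apply: eq_bigr => t _.
  by case: ifP => // /negbT /hg.
have S2 : (#|E|%:R * #|F|%:R) ^+ 2 <= #|dotset E F|%:R * \sum_t nu t ^+ 2.
  rewrite -S1 (restr nu nu0) (restr (fun t => nu t ^+ 2)); first exact: cs_set.
  by move=> t /nu0 ->; rewrite expr0n.
pose G (x : 'rV[K]_d) (t : K) : rat := q * fx F x t - #|F|%:R.
have sumG : forall t, \sum_(x in E) G x t = q * nu t - #|E|%:R * #|F|%:R.
  by move=> t; rewrite /G sumrB -mulr_sumr sumr_const mulr_natl.
have L : \sum_t (\sum_(x in E) G x t) ^+ 2 =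
    q ^+ 2 * \sum_t nu t ^+ 2 - q * (#|E|%:R * #|F|%:R) ^+ 2.
  under eq_bigr do rewrite sumG.
  rewrite sqexp S1 -/q; ring.
have R : \sum_t (#|E|%:R * \sum_(x in E) G x t ^+ 2) =
    #|E|%:R * \sum_(x in E) (q ^+ 2 * Pc F x - q * #|F|%:R ^+ 2).
  rewrite -mulr_sumr exchange_big /=; congr (_ * _); apply: eq_bigr => x _.
  rewrite /G sqexp sum_fx sum_fx2 -/q; ring.
have S3 : q ^+ 2 * \sum_t nu t ^+ 2 - q * (#|E|%:R * #|F|%:R) ^+ 2 <=
    #|E|%:R * \sum_(x in E) (q ^+ 2 * Pc F x - q * #|F|%:R ^+ 2).
  by rewrite -L -R; apply: ler_sum => t _; exact: cs_set.
pose D (x : 'rV[K]_d) : rat := q * Pc F x - #|F|%:R ^+ 2.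
have D0 : forall x, 0 <= D x by move=> x; rewrite /D subr_ge0; exact: Pc_ge.
have DZ : forall (l : K) z, l != 0 -> D (l *: z) = D z by move=> l z l0; rewrite /D PcZ.
have sumD : \sum_z D z = #|F|%:R * ((#|K| ^ d)%:R * (q - 1)).
  have hP := sumPc F; rewrite -/q in hP.
  rewrite /D sumrB -mulr_sumr hP sumr_const card_mx mul1n -[_ *+ (#|K| ^ d)]mulr_natr; ring.
have coneD := cone j0 D0 DZ.
rewrite -/q in coneD.
have S4 : \sum_(x in E) D x <= 2 * #|F|%:R * (#|K| ^ d)%:R.
  apply: le_trans (sum_sub_le ES D0) _.
  have qp : 0 < q - 1 by rewrite subr_gt0.
  rewrite -(ler_pM2l qp); apply: le_trans coneD _.
  by rewrite sumD le_eqVlt; apply/orP; left; apply/eqP; ring.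
have hE : \sum_(x in E) (q ^+ 2 * Pc F x - q * #|F|%:R ^+ 2) = q * \sum_(x in E) D x.
  by rewrite mulr_sumr; apply: eq_bigr => x _; rewrite /D; ring.
rewrite hE in S3.
rewrite natrM in hyp.
set Q : rat := (#|K| ^ d)%:R in S4 hyp.
set nE : rat := #|E|%:R in S1 S2 S3 hyp.
set nF : rat := #|F|%:R in S1 S2 S3 S4 hyp.
set Pi : rat := #|dotset E F|%:R in S2 *.
set N2 := \sum_t nu t ^+ 2 in S2 S3.
set SD := \sum_(x in E) D x in S3 S4.
have q0 : 0 < q by apply: lt_trans q1.
have Q0 : 0 < Q by rewrite /Q ltr0n expn_gt0 -(ltr0n rat) -/q q0.
have nE0 : 0 <= nE by rewrite ler0n.
have nF0 : 0 <= nF by rewrite ler0n.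
have Pi0 : 0 <= Pi by rewrite ler0n.
have P0 : 0 < nE * nF by apply: lt_le_trans hyp; rewrite mulr_gt0.
have T1 : nE * (q * SD) <= nE * (q * (2 * nF * Q)).
  apply: ler_wpM2l => //; apply: ler_wpM2l => //; exact: ltW.
have T2 : q * (nE * nF) * (2 * Q) <= q * (nE * nF) * (nE * nF).
  apply: ler_wpM2l => //; apply: mulr_ge0; [exact: ltW | exact: ltW].
have T3 : q * (q * N2) <= q * (2 * (nE * nF) ^+ 2).
  have e : nE * (q * (2 * nF * Q)) = q * (nE * nF) * (2 * Q) by ring.
  rewrite e in T1.
  have : q ^+ 2 * N2 <= q * (nE * nF) ^+ 2 + q * (nE * nF) * (nE * nF).
    move: S3 T1 T2; set A := q ^+ 2 * N2; set B := q * (nE * nF) ^+ 2.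
    set X := nE * (q * SD); set Y := q * (nE * nF) * (2 * Q).
    set Z := q * (nE * nF) * (nE * nF); lra.
  have -> : q * (q * N2) = q ^+ 2 * N2 by ring.
  by move=> h; apply: le_trans h _; rewrite le_eqVlt; apply/orP; left; apply/eqP; ring.
rewrite ler_pM2l // in T3.
have T4 : (nE * nF) ^+ 2 * q <= (nE * nF) ^+ 2 * (2 * Pi).
  have h1 : (nE * nF) ^+ 2 * q <= Pi * (q * N2).
    have h := ler_wpM2l (ltW q0) S2.
    by rewrite [_ ^+ 2 * q]mulrC [Pi * (q * N2)]mulrCA.
  apply: le_trans h1 _.
  have h2 : Pi * (q * N2) <= Pi * (2 * (nE * nF) ^+ 2) by apply: ler_wpM2l.
  by apply: le_trans h2 _; rewrite le_eqVlt; apply/orP; left; apply/eqP; ring.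
rewrite ler_pM2l ?exprn_gt0 // in T4.
lra.
Qed.
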